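(* Let $k>0$, let $n$ be a positive integer, $p$ a prime with $p\ge 9n^{2k+2}$, $N$ a positive integer, $T=(n-1)(n-2)/2+2(n-1)$, $v_1,v_2,K,M\in\mathbb{Z}_p^T$, and $D(x)=(2-x)v_1+(x-1)v_2+(x-1)(x-2)(K+xM)$. Let $\mathcal A:\mathbb{Z}_p^T\to\mathbb{Z}_p$ be any function with success probability $q=\mathbb{P}(\mathcal A(\mathbf U)=Z_{n-1}(\mathbf U;p))$ ($\mathbf U$ uniform on $\mathbb{Z}_p^T$) satisfying $q\ge 1/n^k$. Let $\mathcal S=\{(x,\mathcal A(D(x))):x=3,4,\dots,p\}$ and, for $f\in\mathbb{Z}_p[x]$, $G(f)=\{(x,f(x)):x=1,\dots,p\}$. Define $$\mathcal F=\{f\in\mathbb{Z}_p[x]:\deg(f)<n^2,\ |G(f)\cap\mathcal S|\ge (p-2)q/2\}.$$ Then $|\mathcal F|\le 3/q$; in particular $|\mathcal F|\le 3n^k$.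
   Context: Arithmetic is in $\mathbb{Z}_p$, elements of $\{1,\dots,p\}$ viewed as residues mod $p$. For $\boldsymbol\sigma\in\{-1,1\}^m$, $I_m(\boldsymbol\sigma)=|\{(i,j):1\le i<j\le m,\ \sigma_i\ne\sigma_j\}|$, $f(m,\boldsymbol\sigma)=\frac{m(m-1)}2-m-I_m(\boldsymbol\sigma)$; a vector in $\mathbb{Z}_p^{m(m-1)/2+2m}$ is read as $(\mathbf J,\mathbf B,\mathbf C)$ with $J_{ij}$ ($1\le i<j\le m$), $B_i$, $C_i$ ($i\le m$), and $Z_m(\mathbf J,\mathbf B,\mathbf C;p)=\sum_{\boldsymbol\sigma}2^{Nf(m,\boldsymbol\sigma)}\prod_{i:\sigma_i=-1}B_i\prod_{i:\sigma_i=+1}C_i\prod_{i<j:\sigma_i\ne\sigma_j}J_{ij}\pmod p$. *)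

(* Defs.v *)
From HB Require Import structures.
From mathcomp Require Import all_boot all_order all_algebra.
From mathcomp Require Import reals exp.
Set Implicit Arguments. Unset Strict Implicit. Unset Printing Implicit Defensive.
Import Order.TTheory GRing.Theory Num.Theory.
Local Open Scope ring_scope.

(* I_m(sigma): sigma : {ffun 'I_m -> bool}, true encodes +1, false encodes -1 *)
Definition Icount (m : nat) (s : {ffun 'I_m -> bool}) : nat :=
  #|[set ij : 'I_m * 'I_m | (ij.1 < ij.2)%N && (s ij.1 != s ij.2)]|.

Definition fexp (m : nat) (s : {ffun 'I_m -> bool}) : int :=
  ((m * (m - 1)) %/ 2)%:Z - m%:Z - (Icount s)%:Z.

Definition Zm (F : fieldType) (m N : nat) (J : 'I_m -> 'I_m -> F) (B C : 'I_m -> F) : F :=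
  \sum_(s : {ffun 'I_m -> bool})
     (2 : F) ^ (N%:Z * fexp s)
     * (\prod_(i : 'I_m | ~~ s i) B i)
     * (\prod_(i : 'I_m | s i) C i)
     * (\prod_(ij : 'I_m * 'I_m | (ij.1 < ij.2)%N && (s ij.1 != s ij.2)) J ij.1 ij.2).

Definition Tdim (m : nat) : nat := (m * (m - 1)) %/ 2 + 2 * m.

(* coordinate access by a natural-number position (0 if out of range) *)
Definition coord (F : fieldType) (T : nat) (v : {ffun 'I_T -> F}) (k : nat) : F :=
  if @insub nat (fun x => (x < T)%N) 'I_T k is Some i then v i else 0.

(* Reading convention (0-based): the J_{ij}, i<j, come first in lexicographic
   order, then B_0..B_{m-1}, then C_0..C_{m-1}. *)
Definition jpos (m i j : nat) : nat := i * m - (i * i.+1) %/ 2 + (j - i - 1).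
Definition bpos (m i : nat) : nat := (m * (m - 1)) %/ 2 + i.
Definition cpos (m i : nat) : nat := (m * (m - 1)) %/ 2 + m + i.

Definition Zvec (F : fieldType) (m N : nat) (v : {ffun 'I_(Tdim m) -> F}) : F :=
  @Zm F m N (fun i j => coord v (jpos m i j))
       (fun i => coord v (bpos m i)) (fun i => coord v (cpos m i)).

Definition Dline (F : fieldType) (T : nat) (v1 v2 K M : {ffun 'I_T -> F}) (x : F)
  : {ffun 'I_T -> F} :=
  [ffun i => (2 - x) * v1 i + (x - 1) * v2 i + (x - 1) * (x - 2) * (K i + x * M i)].

Definition succ_prob (R : realType) (F : finFieldType) (T : nat)
  (A : {ffun 'I_T -> F} -> F) (Z : {ffun 'I_T -> F} -> F) : R :=
  (#|[set u : {ffun 'I_T -> F} | A u == Z u]|)%:R / (#|{: {ffun 'I_T -> F}}|)%:R.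

Definition Sset (p T : nat) (A : {ffun 'I_T -> 'F_p} -> 'F_p) (v1 v2 K M : {ffun 'I_T -> 'F_p})
  : {set 'F_p * 'F_p} :=
  [set ((nat_of_ord x)%:R, A (Dline v1 v2 K M (nat_of_ord x)%:R)) | x : 'I_p.+1 & (3 <= x)%N].

Definition Gset (p : nat) (f : {poly 'F_p}) : {set 'F_p * 'F_p} :=
  [set ((nat_of_ord x)%:R, f.[(nat_of_ord x)%:R]) | x : 'I_p.+1 & (1 <= x)%N].

(* Main.v *)
Require Import Defs.
From HB Require Import structures.
From mathcomp Require Import all_boot all_order all_algebra.
From mathcomp Require Import reals exp.
From mathcomp Require Import zify ring lra.
Import Order.TTheory GRing.Theory Num.Theory.
Set Implicit Arguments. Unset Strict Implicit.
Local Open Scope ring_scope.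
Section Bonf.
Variable T : finType.
Fixpoint pairsum (L : seq {set T}) : nat :=
  match L with [::] => 0%N | A :: L' => (\sum_(B <- L') #|A :&: B| + pairsum L')%N end.

Lemma capU_le (A : {set T}) (L : seq {set T}) :
  (#|A :&: \bigcup_(B <- L) B| <= \sum_(B <- L) #|A :&: B|)%N.
Proof.
elim: L => [|B L IH]; first by rewrite !big_nil setI0 cards0.
rewrite !big_cons setIUr.
apply: leq_trans (leq_add (leqnn _) IH).
have := cardsUI (A :&: B) (A :&: \bigcup_(j <- L) j).
move=> E; rewrite -E; exact: leq_addr.
Qed.

Lemma bonf (L : seq {set T}) :
  (\sum_(A <- L) #|A| <= #|\bigcup_(A <- L) A| + pairsum L)%N.
Proof.
elim: L => [|A L IH]; first by rewrite !big_nil.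
rewrite !big_cons /=.
have E := cardsUI A (\bigcup_(j <- L) j).
have H2 := capU_le A L.
lia.
Qed.

Lemma sum_le_const (I : eqType) (s : seq I) (h : I -> nat) d :
  (forall g, g \in s -> h g <= d)%N -> (\sum_(g <- s) h g <= size s * d)%N.
Proof.
elim: s => [|g s IH] H; first by rewrite big_nil.
rewrite big_cons /= mulSn leq_add //; first by apply: H; rewrite inE eqxx.
by apply: IH => x Hx; apply: H; rewrite inE Hx orbT.
Qed.

Lemma pairsum_le (I : eqType) (F : I -> {set T}) (s : seq I) d :
  uniq s -> (forall f g, f \in s -> g \in s -> f != g -> #|F f :&: F g| <= d)%N ->
  (2 * pairsum (map F s) <= size s * (size s).-1 * d)%N.
Proof.
elim: s => [|f s IH] //= /andP [fs us] H.
rewrite big_map.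
have H1 : (\sum_(g <- s) #|F f :&: F g| <= size s * d)%N.
  apply: sum_le_const => g gs; apply: H; rewrite ?inE ?eqxx ?gs ?orbT //.
  by apply/eqP => E; rewrite E gs in fs.
have H2 := IH us (fun a b ha hb => H a b (mem_behead (s:=f::s) ha) (mem_behead (s:=f::s) hb)).
case: (size s) H1 H2 => [|m] H1 H2 /=; nia.
Qed.
End Bonf.
Lemma core (R : realType) (q a P D m : R) : 0 < q -> 1 <= a -> a^-1 <= q ->
  9 * a^+2 * (D + 1) <= P + 2 -> 0 <= D -> 0 <= m -> m * q <= 3 ->
  (m + 1) * P * q <= 2 * P + (m + 1) * m * D -> (m + 1) * q <= 3.
Proof.
move=> q0 a1 aq HP D0 m0 mq H.
have a0 : 0 < a by lra.
have aq1 : 1 <= a * q.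
  by rewrite -(mulfV (lt0r_neq0 a0)) ler_pM2l // -[a^-1]mulr1 -[q]mulr1.
have a2 : 1 <= a^+2 by nra.
have aq2 : 1 <= (a * q)^+2 by nra.
have P1 : 9 * a^+2 * D + 7 * a^+2 <= P by nra.
have Pq : 9 * D + 7 <= P * q^+2.
  have : (9 * a^+2 * D + 7 * a^+2) * q^+2 <= P * q^+2 by rewrite ler_pM2r // exprn_gt0.
  have : 9 * D + 7 <= (9 * D + 7) * (a * q)^+2 by rewrite ler_peMr //; nra.
  rewrite exprMn; lra.
rewrite leNgt; apply/negP => Hc.
have H2 : (m + 1) * P * q^+2 <= 2 * P * q + 3 * (m + 1) * D.
  have : ((m + 1) * P * q) * q <= (2 * P + (m + 1) * m * D) * q by rewrite ler_pM2r.
  have : (m + 1) * (m * q) * D <= (m+1) * 3 * D.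
    by apply: ler_wpM2r => //; apply: ler_wpM2l => //; lra.
  rewrite expr2; nra.
set X := P * q^+2 - 3 * D.
have X0 : 0 < X by rewrite /X; lra.
have H3 : (m + 1) * X <= 2 * P * q.
  have -> : (m+1)*X = (m+1)*P*q^+2 - 3*(m+1)*D by rewrite /X; ring.
  lra.
have H4 : (m + 1) * q * X <= 2 * P * q^+2.
  have : (m + 1) * X * q <= 2 * P * q * q by rewrite ler_pM2r.
  rewrite expr2; nra.
have H5 : 3 * X < (m + 1) * q * X by rewrite ltr_pM2r.
have H6 : 3 * X < 2 * P * q^+2 by lra.
rewrite /X in H6; lra.
Qed.
Lemma card_ge3 (p : nat) : (2 <= p)%N ->
  (#|[pred x : 'I_p.+1 | (3 <= x)%N]| <= p - 2)%N.
Proof.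
move=> p2.
have E : (#|[pred x : 'I_p.+1 | (3 <= x)%N]| + #|[predC [pred x : 'I_p.+1 | (3 <= x)%N]]| = p.+1)%N.
  exact: (etrans (cardC [pred x : 'I_p.+1 | (3 <= x)%N]) (card_ord _)).

have : (3 <= #|[predC [pred x : 'I_p.+1 | (3 <= x)%N]]|)%N.
  apply/card_geqP; exists [:: inord 0; inord 1; inord 2]; split => //.
    by rewrite /= !inE -!val_eqE /= !inordK //; lia.
  move=> x; rewrite !inE => /or3P [] /eqP -> /=; rewrite inordK //; lia.
lia.
Qed.

Lemma Scard p T (A : {ffun 'I_T -> 'F_p} -> 'F_p) v1 v2 K M : prime p ->
  (#|Sset A v1 v2 K M| <= p - 2)%N.
Proof.
move=> pp; rewrite /Sset.
apply: leq_trans (leq_imset_card _ _) _.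
have -> : #|[set x : 'I_p.+1 | (3<=x)%N]| = #|[pred x : 'I_p.+1 | (3 <= x)%N]|.
  by apply: eq_card => x; rewrite inE.
exact: card_ge3 (prime_gt1 pp).
Qed.

Lemma memG p (f : {poly 'F_p}) z : z \in Gset f -> z.2 = f.[z.1].
Proof. by move=> /imsetP [x _ ->]. Qed.

Lemma GGcard p (f g : {poly 'F_p}) d : prime p -> f != g -> (size f <= d)%N -> (size g <= d)%N ->
  (#|Gset f :&: Gset g| <= d.-1)%N.
Proof.
move=> pp fg sf sg.
set Rt := [set x : 'F_p | root (f - g) x].
have sub : Gset f :&: Gset g \subset [set (x, f.[x]) | x in Rt].
  apply/subsetP => z /setIP [zf zg]; apply/imsetP; exists z.1.
    rewrite inE /root hornerD hornerN -(memG zf) -(memG zg) subrr //.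
  by case: z zf zg => a b zf zg /=; rewrite -(memG zf).
apply: leq_trans (subset_leq_card sub) _.
apply: leq_trans (leq_imset_card _ _) _.
have fg0 : f - g != 0 by rewrite subr_eq0.
have := @max_poly_roots _ (f - g) (enum Rt) fg0.
rewrite -cardE enum_uniq => H.
have : (#|Rt| < size (f - g)%R)%N.
  apply: H => //; apply/allP => x; rewrite mem_enum inE //.
have := size_polyD f (- g)%R; rewrite size_polyN.
move=> h1 h2; have : (#|Rt| < maxn (size f) (size g))%N by exact: leq_trans h2 h1.
move: sf sg; rewrite /maxn; case: ifP; lia.
Qed.
Lemma sum_ge_const (R : realType) (I : eqType) (s : seq I) (h : I -> R) t :
  (forall g, g \in s -> t <= h g) -> (size s)%:R * t <= \sum_(g <- s) h g.
Proof.
elim: s => [|g s IH] H; first by rewrite big_nil mul0r.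
rewrite big_cons /= -addn1 natrD mulrDl mul1r addrC lerD //; first by apply: H; rewrite inE eqxx.
by apply: IH => x Hx; apply: H; rewrite inE Hx orbT.
Qed.

Theorem lemma4 (R : realType) (k : R) (n p N : nat)
  (v1 v2 K M : {ffun 'I_(Tdim n.-1) -> 'F_p})
  (A : {ffun 'I_(Tdim n.-1) -> 'F_p} -> 'F_p) :
  0 < k -> (0 < n)%N -> prime p ->
  9 * (n%:R `^ (2 * k + 2)) <= (p%:R : R) ->
  (0 < N)%N ->
  let q : R := succ_prob R A (@Zvec _ n.-1 N) in
  (n%:R `^ k)^-1 <= q ->
  let inF (f : {poly 'F_p}) :=
    (size f <= n ^ 2)%N &&
    ((p - 2)%:R * q / 2 <= (#|Gset f :&: Sset A v1 v2 K M|)%:R) in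
  forall s : seq {poly 'F_p}, uniq s -> all inF s ->
    (size s)%:R <= 3 / q /\ (size s)%:R <= 3 * (n%:R `^ k).
Proof.
move=> k0 n0 pp Hp N0 q Hq inF s us alls.
set a := n%:R `^ k.
have n1 : (1 : R) <= n%:R by rewrite ler1n.
have a1 : 1 <= a by have := ler_powR n1 (ltW k0); rewrite powRr0.
have a0 : 0 < a by lra.
have q0 : 0 < q by apply: lt_le_trans Hq; rewrite invr_gt0.
have Ha : n%:R `^ (2 * k + 2) = a ^+ 2 * (n%:R : R) ^+ 2.
  rewrite powRD; last by rewrite pnatr_eq0 -lt0n n0 implybT.
  have -> : 2 * k = k * 2%:R by rewrite mulrC.
  rewrite powRrM /a !powR_mulrn //; exact: powR_ge0.
set S := Sset A v1 v2 K M.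
set F := fun f : {poly 'F_p} => Gset f :&: S.
have p2 : (2 <= p)%N := prime_gt1 pp.
set P : R := (p - 2)%:R.
have HP : P + 2 = p%:R by rewrite /P natrB // subrK.
set D : R := (n ^ 2 - 1)%:R.
have HD : D + 1 = (n%:R : R) ^+ 2.
  rewrite /D natrB; last by rewrite expn_gt0 n0.
  by rewrite subrK natrX.
have D0 : 0 <= D by rewrite /D ler0n.
have claim : forall m, (m <= size s)%N -> m%:R * q <= 3.
  elim=> [|m IH] ms; first by rewrite mul0r; lra.
  have IH' := IH (ltnW ms).
  set s' := take m.+1 s.
  have ss' : size s' = m.+1 by rewrite size_takel.
  have us' : uniq s' := take_uniq _ us.
  have in' : forall f, f \in s' -> inF f.
    by move=> f fs; apply: (allP alls); apply: mem_take fs.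
  have B := bonf (map F s').
  have U : (#|\bigcup_(X <- map F s') X| <= p - 2)%N.
    apply: leq_trans (Scard A v1 v2 K M pp).
    apply: subset_leq_card.
    rewrite big_map; elim: s' {ss' us' in' B} => [|f r IHr]; first by rewrite big_nil sub0set.
    by rewrite big_cons subUset IHr subsetIr.
  have PS := @pairsum_le _ _ F s' (n ^ 2).-1 us'.
  have PS' : (2 * pairsum (map F s') <= m.+1 * m * (n ^ 2).-1)%N.
    have := PS; rewrite ss' /=; apply => f g fs gs fg.
    apply: leq_trans (GGcard pp fg _ _).
      apply: subset_leq_card; apply/subsetP => z; rewrite !inE.
      by case/andP => /andP [-> _] /andP [-> _].
      by case/andP: (in' f fs).
      by case/andP: (in' g gs).
  have Sg : (m.+1)%:R * (P * q / 2) <= \sum_(X <- map F s') (#|X|%:R : R).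
    rewrite big_map -ss'; apply: sum_ge_const => f fs.
    by case/andP: (in' f fs).
  rewrite -natr_sum in Sg.
  have B' : ((\sum_(X <- map F s') #|X|)%:R : R) <= P + (pairsum (map F s'))%:R.
    rewrite /P -natrD ler_nat; apply: leq_trans B _; exact: leq_add U (leqnn _).
  have PS'' : 2 * ((pairsum (map F s'))%:R : R) <= (m.+1)%:R * m%:R * D.
    move: PS'; rewrite -subn1 => PS'.
    by rewrite /D -!natrM ler_nat.
  have C := @core R q a P D m%:R q0 a1 Hq.
  rewrite -addn1 natrD.
  apply: C => //.
  - by rewrite HD HP -mulrA -Ha.
  rewrite -natr1 in Sg PS''.
  have -> : (m%:R + 1) * P * q = 2 * ((m%:R + 1) * (P * q / 2)) by field.
  lra.
have := claim _ (leqnn (size s)).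
move=> H; split; first by rewrite ler_pdivlMr.
have aq : 1 <= a * q.
  by rewrite -(mulfV (lt0r_neq0 a0)) ler_pM2l // -[a^-1]mulr1 -[q]mulr1.
have s0 : (0 : R) <= (size s)%:R by rewrite ler0n.
nra.
Qed.
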